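(* Fix $\rho\in\Gamma$. Suppose that $(Y^{(1)},\nu^{(1)}_{ij},\mu^{(1)}_{ij},\nu^{(1)}_{i0},\mu^{(1)}_{0i})$ and $(Y^{(2)},\nu^{(2)}_{ij},\mu^{(2)}_{ij},\nu^{(2)}_{i0},\mu^{(2)}_{0i})$ (with $Y^{(k)}=Y^{(k)\prime}>0$, all constants positive, $j\in S^\varphi_i$, $i=1,\dots,N$, $\nu_{i0}$ defined for $i$ with $d_i=1$ and $\mu_{0i}$ for $i$ with $\bar d_i=1$) both satisfy $\Upsilon_i<0$ for all $i=1,\dots,N$. For $\gamma\in[0,1]$ define $Y_\gamma=\gamma Y^{(1)}+(1-\gamma)Y^{(2)}$, $\nu_{ij,\gamma}=[\gamma(\nu^{(1)}_{ij})^{-1}+(1-\gamma)(\nu^{(2)}_{ij})^{-1}]^{-1}$, $\mu_{ij,\gamma}=[\gamma(\mu^{(1)}_{ij})^{-1}+(1-\gamma)(\mu^{(2)}_{ij})^{-1}]^{-1}$, and similarly $\nu_{i0,\gamma}$ (for $d_i=1$) and $\mu_{0i,\gamma}$ (for $\bar d_i=1$). Then $(Y_\gamma,\nu_{ij,\gamma},\mu_{ij,\gamma},\nu_{i0,\gamma},\mu_{0i,\gamma})$ also satisfies $\Upsilon_i<0$ for all $i=1,\dots,N$.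
   Context: Graphs: node set $\mathcal{V}=\{0,\dots,N\}$, followers $\mathcal{V}_0=\{1,\dots,N\}$; directed interconnection graph with edge set $\mathcal{E}^\varphi$ ($(j,i)$ = edge from $j$ to $i$). For $i\in\mathcal{V}_0$: $S^\varphi_i=\{j\in\mathcal{V}_0:(j,i)\in\mathcal{E}^\varphi\}$; $d_i=1$ if $(0,i)\in\mathcal{E}^\varphi$ else $0$; $\bar d_i=1$ if $(i,0)\in\mathcal{E}^\varphi$ else $0$. Data: $\Gamma=[\rho_{\min},\rho_{\max}]$, continuous $A:\Gamma\to\mathbb{R}^{n\times n}$, $B_1\in\mathbb{R}^{n\times p}$, $B_2\in\mathbb{R}^{n\times m}$, matrices $C_{ij}\in\mathbb{R}^{q_{ij}\times n}$ for $(j,i)\in\mathcal{E}^\varphi$, $R=R'>0$, and a fixed matrix $\bar Q=\bar Q'>0$ (in the paper $\bar Q=(\sigma^2/\hat\lambda)Q$ for a weighting matrix $Q>0$ and graph-dependent positive constants $\sigma,\hat\lambda$). For $i\in\mathcal{V}_0$: $\hat C_i$ stacks $C_{ij}$ over $j\in S^\varphi_i$ and $\Phi_i=\mathrm{diag}[\nu_{ij}^{-1}I,\ j\in S^\varphi_i]$; $\bar C_i$ stacks $C_{ri}$ over $r\in\mathcal{V}_0$ with $i\in S^\varphi_r$, and $\Omega_i=\mathrm{diag}[\mu_{ri}^{-1}I]$ over the same $r$. Define $Z_i=A(\rho)Y+YA(\rho)'-B_1R^{-1}B_1'+\big(\sum_{j\in S^\varphi_i}(\nu_{ij}^{-1}+\mu_{ij}^{-1})+d_i\nu_{i0}^{-1}+\sum_{k\in\mathcal{V}_0:\bar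 d_k=1}\mu_{0k}^{-1}\big)B_2B_2'$ (the $\nu_{i0}$ term absent if $d_i=0$), and $$\Upsilon_i=\begin{bmatrix}Z_i & Y\bar Q^{1/2} & Y\hat C_i' & Y\bar C_i' & YC_{i0}' & YC_{0i}'\\ \bar Q^{1/2}Y & -I & 0&0&0&0\\ \hat C_iY&0&-\Phi_i&0&0&0\\ \bar C_iY&0&0&-\Omega_i&0&0\\ C_{i0}Y&0&0&0&-\nu_{i0}^{-1}I&0\\ C_{0i}Y&0&0&0&0&-(N\mu_{0i})^{-1}I\end{bmatrix},$$ where the block row/column with $C_{i0}$ is present only if $d_i=1$ and the one with $C_{0i}$ only if $\bar d_i=1$. *)

(* Defs.v *)
From HB Require Import structures.
From mathcomp Require Import all_boot all_order all_algebra.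
From mathcomp Require Import all_classical all_reals topology normedtype.
Set Implicit Arguments. Unset Strict Implicit. Unset Printing Implicit Defensive.
Import Order.TTheory GRing.Theory Num.Theory.
Local Open Scope ring_scope.

Definition posdef (R : numDomainType) (k : nat) (M : 'M[R]_k) : Prop :=
  M^T = M /\ forall x : 'cV[R]_k, x != 0 -> 0 < (x^T *m M *m x) 0 0.
Definition negdef (R : numDomainType) (k : nat) (M : 'M[R]_k) : Prop :=
  posdef (- M).

(* A "block" of an arrow-shaped LMI: a matrix C (q x n) and a scalar w;
   it contributes the off-diagonal blocks C Y and Y C' and the diagonal
   block -w I. *)
Definition blk (R : numDomainType) (n : nat) := ({q : nat & 'M[R]_(q, n)} * R)%type.

Fixpoint btot (R : numDomainType) n (bs : seq (blk R n)) : nat :=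
  if bs is b :: bs' then (projT1 b.1 + btot bs')%N else 0%N.

Fixpoint bstack (R : numDomainType) n (bs : seq (blk R n)) : 'M[R]_(btot bs, n) :=
  match bs return 'M[R]_(btot bs, n) with
  | [::] => 0
  | b :: bs' => col_mx (projT2 b.1) (bstack bs')
  end.

Fixpoint bdiag (R : numDomainType) n (bs : seq (blk R n)) : 'M[R]_(btot bs) :=
  match bs return 'M[R]_(btot bs) with
  | [::] => 0
  | b :: bs' => block_mx (b.2%:M) 0 0 (bdiag bs')
  end.

Definition arrow_mx (R : numDomainType) n (Z Y : 'M[R]_n) (bs : seq (blk R n))
  : 'M[R]_(n + btot bs) :=
  block_mx Z (Y *m (bstack bs)^T) (bstack bs *m Y) (- bdiag bs).

(* Nodes are 'I_N.+1, node ord0 is the leader 0; E j i means (j,i) is an edge. *)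
Definition followers N : seq 'I_N.+1 := [seq i <- enum 'I_N.+1 | i != ord0].
Definition Sphi N (E : rel 'I_N.+1) (i : 'I_N.+1) : seq 'I_N.+1 :=
  [seq j <- enum 'I_N.+1 | (j != ord0) && E j i].
Definition Sout N (E : rel 'I_N.+1) (i : 'I_N.+1) : seq 'I_N.+1 :=
  [seq r <- enum 'I_N.+1 | (r != ord0) && E i r].

Section Ups.
Variables (R : realType) (n p m N : nat).
Variables (A : 'M[R]_n) (B1 : 'M[R]_(n, p)) (B2 : 'M[R]_(n, m)) (Rw : 'M[R]_p)
  (Qh : 'M[R]_n) (E : rel 'I_N.+1) (q : 'I_N.+1 -> 'I_N.+1 -> nat)
  (C : forall i j : 'I_N.+1, 'M[R]_(q i j, n)).
(* nu i j = nu_{ij}, nu i 0 = nu_{i0}; mu i j = mu_{ij}, mu 0 i = mu_{0i} *)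
Variables (nu mu : 'I_N.+1 -> 'I_N.+1 -> R) (Y : 'M[R]_n).

Definition Zcoef (i : 'I_N.+1) : R :=
  \sum_(j <- Sphi E i) ((nu i j)^-1 + (mu i j)^-1)
  + (if E ord0 i then (nu i ord0)^-1 else 0)
  + \sum_(k <- followers N | E k ord0) (mu ord0 k)^-1.

Definition Zmat (i : 'I_N.+1) : 'M[R]_n :=
  A *m Y + Y *m A^T - B1 *m invmx Rw *m B1^T + Zcoef i *: (B2 *m B2^T).

Definition mkblk (k : nat) (M : 'M[R]_(k, n)) (w : R) : blk R n :=
  (existT (fun k => 'M[R]_(k, n)) k M, w).

Definition Ublocks (i : 'I_N.+1) : seq (blk R n) :=
  [:: mkblk Qh 1]
  ++ [seq mkblk (C i j) (nu i j)^-1 | j <- Sphi E i]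
  ++ [seq mkblk (C r i) (mu r i)^-1 | r <- Sout E i]
  ++ (if E ord0 i then [:: mkblk (C i ord0) (nu i ord0)^-1] else [::])
  ++ (if E i ord0 then [:: mkblk (C ord0 i) (N%:R * mu ord0 i)^-1] else [::]).

(* Upsilon_i (evaluated at the fixed rho, A = A(rho); Qh = Qbar^{1/2}) *)
Definition Upsilon (i : 'I_N.+1) : 'M[R]_(n + btot (Ublocks i)) :=
  arrow_mx (Zmat i) Y (Ublocks i).
End Ups.

Definition pos_consts (R : realType) N (E : rel 'I_N.+1) (nu mu : 'I_N.+1 -> 'I_N.+1 -> R) : Prop :=
  (forall i j : 'I_N.+1, i != ord0 -> j != ord0 -> E j i -> 0 < nu i j /\ 0 < mu i j)
  /\ (forall i : 'I_N.+1, i != ord0 -> E ord0 i -> 0 < nu i ord0)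
  /\ (forall i : 'I_N.+1, i != ord0 -> E i ord0 -> 0 < mu ord0 i).

Definition hcomb (R : realType) (gamma a b : R) : R :=
  (gamma * a^-1 + (1 - gamma) * b^-1)^-1.

(* Main.v *)
Require Import Defs.
From HB Require Import structures.
From mathcomp Require Import all_boot all_order all_algebra.
From mathcomp Require Import all_classical all_reals topology normedtype.
From mathcomp Require Import ring lra.
Import Order.TTheory GRing.Theory Num.Theory numFieldNormedType.Exports.
Local Open Scope ring_scope.


Set Implicit Arguments.
Unset Strict Implicit.
Section H.
Variables (R : realType) (n : nat).
Notation sh := (seq {q : nat & 'M[R]_(q, n)}).

Fixpoint KL (s : sh) : nat := if s is b :: s' then (projT1 b + KL s')%N else 0%N.
Fixpoint stackL (s : sh) : 'M[R]_(KL s, n) :=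
  match s return 'M[R]_(KL s, n) with
  | [::] => 0 | b :: s' => col_mx (projT2 b) (stackL s') end.
Fixpoint diagL (s : sh) (ws : seq R) : 'M[R]_(KL s) :=
  match s return 'M[R]_(KL s) with
  | [::] => 0 | b :: s' => block_mx ((head 0 ws)%:M) 0 0 (diagL s' (behead ws)) end.

Lemma rep (bs : seq (blk R n)) (P : forall k, 'M[R]_(k, n) -> 'M[R]_k -> Prop) :
  P _ (stackL (map fst bs)) (diagL (map fst bs) (map snd bs)) ->
  P _ (bstack bs) (bdiag bs).
Proof.
elim: bs P => [|b bs IH] P //= H.
exact: (IH (fun k S D => P (projT1 b.1 + k)%N (col_mx (projT2 b.1) S) (block_mx b.2%:M 0 0 D))).
Qed.

Lemma rep_inv (bs : seq (blk R n)) (P : forall k, 'M[R]_(k, n) -> 'M[R]_k -> Prop) :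
  P _ (bstack bs) (bdiag bs) ->
  P _ (stackL (map fst bs)) (diagL (map fst bs) (map snd bs)).
Proof.
elim: bs P => [|b bs IH] P //= H.
exact: (IH (fun k S D => P (projT1 b.1 + k)%N (col_mx (projT2 b.1) S) (block_mx b.2%:M 0 0 D))).
Qed.

Fixpoint comb3 (g : R) (b1 b2 b3 : seq (blk R n)) : Prop :=
  match b1, b2, b3 with
  | x1 :: r1, x2 :: r2, x3 :: r3 =>
      [/\ x1.1 = x3.1, x2.1 = x3.1, x3.2 = g * x1.2 + (1 - g) * x2.2 & comb3 g r1 r2 r3]
  | [::], [::], [::] => True
  | _, _, _ => False
  end.

Lemma comb3_cat g a1 a2 a3 c1 c2 c3 :
  comb3 g a1 a2 a3 -> comb3 g c1 c2 c3 -> comb3 g (a1 ++ c1) (a2 ++ c2) (a3 ++ c3).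
Proof.
elim: a1 a2 a3 => [|x1 a1 IH] [|x2 a2] [|x3 a3] //= [h1 h2 h3 h4] hc.
by split => //; apply: IH.
Qed.

Lemma comb3_map (T : Type) g (s : seq T) f1 f2 f3 :
  (forall j, [/\ (f1 j).1 = (f3 j).1, (f2 j).1 = (f3 j).1 &
     (f3 j).2 = g * (f1 j).2 + (1 - g) * (f2 j).2]) ->
  comb3 g (map f1 s) (map f2 s) (map f3 s).
Proof. by move=> H; elim: s => //= j s IH; case: (H j). Qed.

Lemma comb3_sh1 g b1 b2 b3 : comb3 g b1 b2 b3 -> map fst b1 = map fst b3.
Proof.
elim: b1 b2 b3 => [|x1 b1 IH] [|x2 b2] [|x3 b3] //= [-> _ _ h]; congr cons; exact: IH h.
Qed.

Lemma comb3_sh2 g b1 b2 b3 : comb3 g b1 b2 b3 -> map fst b2 = map fst b3.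
Proof.
elim: b1 b2 b3 => [|x1 b1 IH] [|x2 b2] [|x3 b3] //= [_ -> _ h]; congr cons; exact: IH h.
Qed.

Lemma comb3_diag g b1 b2 b3 : comb3 g b1 b2 b3 ->
  diagL (map fst b3) (map snd b3) =
  g *: diagL (map fst b3) (map snd b1) + (1 - g) *: diagL (map fst b3) (map snd b2).
Proof.
elim: b3 b1 b2 => [|x3 b3 IH] [|x1 b1] [|x2 b2] //=.
  by rewrite !scaler0 addr0.
case=> _ _ h3 h; rewrite (IH _ _ h) !scale_block_mx add_block_mx !scaler0 !addr0.
congr block_mx; apply/matrixP => a b; rewrite !mxE h3; case: (a == b) => /=; ring.
Qed.

Lemma conv_negdef k (M1 M2 : 'M[R]_k) g : 0 <= g <= 1 ->
  negdef M1 -> negdef M2 -> negdef (g *: M1 + (1 - g) *: M2).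
Proof.
move=> /andP[g0 g1] [t1 p1] [t2 p2]; split.
  have t1' : M1^T = M1 by apply: oppr_inj; rewrite -linearN.
  have t2' : M2^T = M2 by apply: oppr_inj; rewrite -linearN.
  by rewrite linearN linearD !linearZ /= t1' t2'.
move=> x x0; have := p1 x x0; have := p2 x x0.
rewrite opprD -!scalerN mulmxDr mulmxDl -!scalemxAr -!scalemxAl !mxE.
move: (\sum_j _) (\sum_j _) => b a hb ha.
nra.
Qed.
End H.
Unset Implicit Arguments.
Set Strict Implicit.

Local Open Scope classical_set_scope.

Theorem lemma1 (R : realType) (n p m N : nat) (rmin rmax : R)
  (A : R -> 'M[R]_n) (B1 : 'M[R]_(n, p)) (B2 : 'M[R]_(n, m))
  (E : rel 'I_N.+1) (q : 'I_N.+1 -> 'I_N.+1 -> nat)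
  (C : forall i j : 'I_N.+1, 'M[R]_(q i j, n))
  (Rw : 'M[R]_p) (Qbar Qh : 'M[R]_n) (rho : R)
  (Y1 Y2 : 'M[R]_n) (nu1 mu1 nu2 mu2 : 'I_N.+1 -> 'I_N.+1 -> R) :
  (forall i j : 'I_n, {within `[rmin, rmax], continuous (fun r => A r i j)}) ->
  posdef Rw -> posdef Qbar -> posdef Qh -> Qh *m Qh = Qbar ->
  (rmin <= rho <= rmax)%R ->
  posdef Y1 -> posdef Y2 ->
  pos_consts E nu1 mu1 -> pos_consts E nu2 mu2 ->
  (forall i : 'I_N.+1, i != ord0 ->
     negdef (Upsilon (A rho) B1 B2 Rw Qh E C nu1 mu1 Y1 i)) ->
  (forall i : 'I_N.+1, i != ord0 ->
     negdef (Upsilon (A rho) B1 B2 Rw Qh E C nu2 mu2 Y2 i)) ->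
  forall gamma : R, (0 <= gamma <= 1)%R ->
  forall i : 'I_N.+1, i != ord0 ->
    negdef (Upsilon (A rho) B1 B2 Rw Qh E C
              (fun a b => hcomb gamma (nu1 a b) (nu2 a b))
              (fun a b => hcomb gamma (mu1 a b) (mu2 a b))
              (gamma *: Y1 + (1 - gamma) *: Y2) i).
Proof.
Proof.
move=> _ _ _ _ _ _ _ _ _ _ H1 H2 g hg i hi.
have {H1}H1 := H1 i hi; have {H2}H2 := H2 i hi.
move: H1 H2; rewrite /Upsilon /arrow_mx.
set nug := (fun a b : 'I_N.+1 => hcomb g (nu1 a b) (nu2 a b)).
set mug := (fun a b : 'I_N.+1 => hcomb g (mu1 a b) (mu2 a b)).
set b1 := Ublocks Qh E C nu1 mu1 i.
set b2 := Ublocks Qh E C nu2 mu2 i.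
set b3 := Ublocks Qh E C nug mug i.
have hinv : forall a b, (hcomb g a b)^-1 = g * a^-1 + (1 - g) * b^-1.
  by move=> a b; rewrite /hcomb invrK.
have hc : comb3 g b1 b2 b3.
  rewrite /b1 /b2 /b3 /Ublocks.
  apply: comb3_cat; first by rewrite /=; split => //; ring.
  apply: comb3_cat; first by apply: comb3_map => j /=; rewrite hinv.
  apply: comb3_cat; first by apply: comb3_map => j /=; rewrite hinv.
  apply: comb3_cat; first by case: (E ord0 i) => //=; rewrite hinv.
  case: (E i ord0) => //=; split => //; rewrite !invfM hinv; ring.
have hzc : Zcoef E nug mug i = g * Zcoef E nu1 mu1 i + (1 - g) * Zcoef E nu2 mu2 i.
  rewrite /Zcoef.
  have -> : \sum_(j <- Sphi E i) ((nug i j)^-1 + (mug i j)^-1) =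
     g * \sum_(j <- Sphi E i) ((nu1 i j)^-1 + (mu1 i j)^-1) +
     (1 - g) * \sum_(j <- Sphi E i) ((nu2 i j)^-1 + (mu2 i j)^-1).
    by rewrite !mulr_sumr -big_split; apply: eq_bigr => j _; rewrite /nug /mug !hinv /=; ring.
  have -> : \sum_(k <- followers N | E k ord0) (mug ord0 k)^-1 =
     g * \sum_(k <- followers N | E k ord0) (mu1 ord0 k)^-1 +
     (1 - g) * \sum_(k <- followers N | E k ord0) (mu2 ord0 k)^-1.
    by rewrite !mulr_sumr -big_split; apply: eq_bigr => k _; rewrite /mug !hinv /=.
  case: (E ord0 i); rewrite /nug ?hinv; ring.
have hZ : Zmat (A rho) B1 B2 Rw E nug mug (g *: Y1 + (1 - g) *: Y2) i =
    g *: Zmat (A rho) B1 B2 Rw E nu1 mu1 Y1 i + (1 - g) *: Zmat (A rho) B1 B2 Rw E nu2 mu2 Y2 i.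
  rewrite /Zmat hzc mulmxDr mulmxDl -!scalemxAr -!scalemxAl.
  apply/matrixP => a b; rewrite !mxE; ring.
move=> H1 H2.
pose P (Z Y : 'M[R]_n) := fun k (S : 'M[R]_(k, n)) (D : 'M[R]_k) =>
  negdef (block_mx Z (Y *m S^T) (S *m Y) (- D)).
have {H1}H1 := rep_inv (P := P _ Y1) H1.
have {H2}H2 := rep_inv (P := P _ Y2) H2.
rewrite /P (comb3_sh1 hc) in H1.
rewrite /P (comb3_sh2 hc) in H2.
apply: (rep (P := P _ _)); rewrite /P (comb3_diag hc) hZ.
set S := stackL _ in H1 H2 *; set D1 := diagL _ (map snd b1) in H1 H2 *.
set D2 := diagL _ (map snd b2) in H1 H2 *.
set Z1 := Zmat _ _ _ _ _ _ _ Y1 i in H1 H2 *; set Z2 := Zmat _ _ _ _ _ _ _ Y2 i in H1 H2 *.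
clearbody S D1 D2 Z1 Z2.
have -> : block_mx (g *: Z1 + (1 - g) *: Z2) ((g *: Y1 + (1 - g) *: Y2) *m S^T)
    (S *m (g *: Y1 + (1 - g) *: Y2)) (- (g *: D1 + (1 - g) *: D2)) =
  g *: block_mx Z1 (Y1 *m S^T) (S *m Y1) (- D1) +
  (1 - g) *: block_mx Z2 (Y2 *m S^T) (S *m Y2) (- D2).
  rewrite !scale_block_mx add_block_mx mulmxDr mulmxDl -!scalemxAr -!scalemxAl.
  by rewrite opprD -!scalerN.
exact: conv_negdef.
Qed.
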